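(* Let $c\in\mathbb{F}_4$ satisfy $c^2+c+1=0$ and let $L(x)=x^4+cx$. Then $L$ is a bijection of $\mathbb{F}_{4^n}$ if and only if $3\nmid n$. Consequently, the function $F(x)=x^{12}+cx^3=L(x^3)$ is APN on $\mathbb{F}_{4^n}$ for every positive integer $n$ not divisible by $3$.
   Context: A function $f:K\to K$ on a finite field $K$ of characteristic $2$ is almost perfect nonlinear (APN) on $K$ if for all $a,b\in K$ with $a\ne0$ the equation $f(x+a)+f(x)=b$ has at most $2$ solutions $x\in K$. *)

(* Defs.v *)
From HB Require Import structures.
From mathcomp Require Import all_boot all_order all_algebra all_field.
Set Implicit Arguments. Unset Strict Implicit. Unset Printing Implicit Defensive.
Import GRing.Theory.
Local Open Scope ring_scope.

Definition APN (K : finFieldType) (f : K -> K) : Prop :=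
  forall a b : K, a != 0 -> leq #|[set x : K | f (x + a) + f x == b]| 2.

(* Main.v *)
Require Import Defs.
From HB Require Import structures.
From mathcomp Require Import all_boot all_order all_algebra all_field all_solvable.
Import GRing.Theory.
Local Open Scope ring_scope.

Lemma char2K {n : nat} {K : finFieldType} (hK : #|K| = (4 ^ n)%N) :
  2%N \in [pchar K].
Proof. by apply: (@card_finPcharP _ 2 (2 * n)) => //; rewrite hK expnM. Qed.

Lemma sqrD2 {K : finFieldType} (h2 : 2%N \in [pchar K]) (x y : K) :
  (x + y) ^+ 2 = x ^+ 2 + y ^+ 2.
Proof. by rewrite sqrrD mulr2n addrr_pchar2 // addr0. Qed.

Lemma exp4D {K : finFieldType} (h2 : 2%N \in [pchar K]) (x y : K) :
  (x + y) ^+ 4 = x ^+ 4 + y ^+ 4.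
Proof.
by rewrite -[4%N]/(2 * 2)%N !exprM sqrD2 // sqrD2.
Qed.

Lemma Ladd {K : finFieldType} (h2 : 2%N \in [pchar K]) (c x y : K) :
  (x + y) ^+ 4 + c * (x + y) = (x ^+ 4 + c * x) + (y ^+ 4 + c * y).
Proof. by rewrite exp4D // mulrDr addrACA. Qed.

Lemma eq_pchar2 {K : finFieldType} (h2 : 2%N \in [pchar K]) (x y : K) :
  x + y = 0 -> x = y.
Proof. by move/eqP; rewrite addr_eq0 oppr_pchar2 // => /eqP. Qed.

Lemma c_props {K : finFieldType} (h2 : 2%N \in [pchar K]) {c : K}
  (hc : c ^+ 2 + c + 1 = 0) : c ^+ 2 = c + 1 /\ c ^+ 3 = 1 /\ c != 1 /\ c != 0.
Proof.
have c2 : c ^+ 2 = c + 1 by apply: eq_pchar2 => //; rewrite addrA.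
split=> //; split.
  by rewrite exprSr c2 mulrDl mul1r -expr2 c2 addrAC addrr_pchar2 // add0r.
split; apply/eqP => E; move: hc; rewrite E ?expr1n ?expr0n /=.
  by rewrite addrr_pchar2 // add0r => /eqP; rewrite oner_eq0.
by rewrite !add0r => /eqP; rewrite oner_eq0.
Qed.

Lemma L_inj (n : nat) (K : finFieldType) (hK : #|K| = (4 ^ n)%N)
    (c : K) (hc : c ^+ 2 + c + 1 = 0) :
  ~~ (3 %| n)%N -> injective (fun x : K => x ^+ 4 + c * x).
Proof.
move=> n3 x y /= Exy.
have h2 := char2K hK.
have [c2 [c3 [c1 c0]]] := c_props h2 hc.
set w := x + y.
have Lw : w ^+ 4 + c * w = 0 by rewrite /w Ladd // Exy addrr_pchar2.
have [w0|wn0] := eqVneq w 0; first exact: eq_pchar2 h2 _ _ w0.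
have w4 : w ^+ 4 = c * w by apply: eq_pchar2 h2 _ _ Lw.
have c4 : c ^+ 4 = c by rewrite exprSr c3 mul1r.
have wk : forall k, w ^+ (4 ^ k) = c ^+ k * w.
  elim=> [|k IH]; first by rewrite expn0 expr1 expr0 mul1r.
  by rewrite expnSr exprM IH exprMn w4 -exprM mulnC exprM c4 mulrA -exprSr.
have cn : c ^+ n = 1.
  apply: (mulIf wn0); rewrite mul1r -wk -hK; exact: expf_card.
move: cn; rewrite (divn_eq n 3) exprD mulnC exprM c3 expr1n mul1r.
have : (n %% 3 < 3)%N by rewrite ltn_mod.
move: n3; rewrite /dvdn; case: (n %% 3)%N => [|[|[|]]] //= _ _.
  by rewrite expr1 => E; rewrite E eqxx in c1.
rewrite c2 => /eqP; rewrite -subr_eq0 addrK => /eqP E.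
by rewrite E eqxx in c0.
Qed.

Lemma cube_root (n : nat) (K : finFieldType) (hK : #|K| = (4 ^ n)%N)
    (c : K) (hc : c ^+ 2 + c + 1 = 0) :
  (3 %| n)%N -> exists2 x : K, x != 0 & x ^+ 3 = c.
Proof.
move=> n3.
have h2 := char2K hK.
have [c2 [c3 [c1 c0]]] := c_props h2 hc.
set N := #|K|.-1.
have KN : #|K| = N.+1 by rewrite /N prednK // (leq_trans _ (finNzRing_gt1 K)).
have unitN : forall x : K, x != 0 -> x ^+ N = 1.
  by move=> x x0; apply: (mulIf x0); rewrite mul1r -exprSr -KN expf_card.
have N0 : (0 < N)%N by rewrite -ltnS -KN finNzRing_gt1.
have : has N.-primitive_root (enum (predC1 (0 : K))).
  apply: has_prim_root => //.
  - by apply/allP => x; rewrite mem_enum /= => x0; rewrite unity_rootE unitN.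
  - exact: enum_uniq.
  - by rewrite -cardE cardC1.
case/hasP => z _ zprim.
have [i ci] := prim_rootP zprim (unitN c c0).
have N9 : (9 %| N)%N.
  have -> : N = (4 ^ n - 1)%N by rewrite /N hK subn1.
  rewrite -eqn_mod_dvd ?expn_gt0 //.
  case/dvdnP: n3 => k ->; rewrite mulnC expnM -modnXm.
  by rewrite [(4 ^ 3 %% 9)%N]/= exp1n.
have i3 : (3 %| i)%N.
  have : (N %| 3 * i)%N by rewrite (prim_order_dvd zprim) mulnC exprM -ci c3.
  move/(dvdn_trans N9); rewrite -[9%N]/(3 * 3)%N dvdn_pmul2l //.
exists (z ^+ (i %/ 3)).
  by apply: contra_neq c0 => E; rewrite ci -(divnK i3) exprM E expr0n.
by rewrite -exprM divnK.
Qed.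

Lemma Qform {K : finFieldType} (h2 : 2%N \in [pchar K]) (a y : K) :
  (y + a) ^+ 3 + y ^+ 3 = y ^+ 2 * a + a ^+ 2 * y + a ^+ 3.
Proof.
rewrite exprSr sqrD2 // mulrDl !mulrDr -!exprSr addrC !addrA.
by rewrite addrr_pchar2 // add0r.
Qed.

Lemma Qsol {K : finFieldType} (h2 : 2%N \in [pchar K]) (a x x1 : K) :
  a != 0 -> (x + a) ^+ 3 + x ^+ 3 = (x1 + a) ^+ 3 + x1 ^+ 3 ->
  x = x1 \/ x = x1 + a.
Proof.
move=> a0; rewrite !Qform // => /addIr E.
set w := x + x1.
have W : (w * a) * (w + a) = 0.
  have -> : (w * a) * (w + a) = w ^+ 2 * a + a ^+ 2 * w.
    rewrite mulrDr; congr (_ + _); first by rewrite mulrAC -expr2.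
    by rewrite -mulrA -expr2 mulrC.
  by rewrite /w (sqrD2 h2) mulrDl mulrDr addrACA E addrr_pchar2.
move/eqP: W; rewrite !mulf_eq0 (negbTE a0) orbF => /orP [] /eqP W.
  by left; apply: eq_pchar2 h2 _ _ W.
by right; apply: eq_pchar2 h2 _ _ _; rewrite addrA.
Qed.

Lemma FQ {K : finFieldType} (h2 : 2%N \in [pchar K]) (c a y : K) :
  ((y + a) ^+ 12 + c * (y + a) ^+ 3) + (y ^+ 12 + c * y ^+ 3) =
  ((y + a) ^+ 3 + y ^+ 3) ^+ 4 + c * ((y + a) ^+ 3 + y ^+ 3).
Proof. by rewrite Ladd // -!exprM. Qed.

Theorem mainTheorem6 (n : nat) (K : finFieldType) (hK : #|K| = (4 ^ n)%N)
    (c : K) (hc : c ^+ 2 + c + 1 = 0) :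
  (bijective (fun x : K => x ^+ 4 + c * x) <-> ~~ (3 %| n)%N) /\
  ((0 < n)%N -> ~~ (3 %| n)%N -> APN (fun x : K => x ^+ 12 + c * x ^+ 3)).
Proof.
have h2 := char2K hK.
split.
  split; last by move=> n3; apply: injF_bij; apply: (L_inj _ _ hK _ hc n3).
  move=> /bij_inj Linj; apply/negP => n3.
  have [x x0 x3] := cube_root _ _ hK _ hc n3.
  move/eqP: x0; apply; apply: Linj => /=.
  rewrite expr0n mulr0 addr0 -[4%N]/(3 + 1)%N exprD x3 expr1.
  exact: addrr_pchar2.
move=> _ n3 a b a0.
have Linj := (L_inj _ _ hK _ hc n3).
set S := [set x | _].
have [->|[x1 Hx1]] := set_0Vmem S; first by rewrite cards0.
apply: leq_trans (subset_leq_card (_ : S \subset [set x1; x1 + a])) _.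
  apply/subsetP => x; rewrite !inE => /eqP Hx; move: Hx1; rewrite inE => /eqP Hx1.
  have E : (x + a) ^+ 3 + x ^+ 3 = (x1 + a) ^+ 3 + x1 ^+ 3.
    by apply: Linj; rewrite /= -!(FQ h2) Hx Hx1.
  by case: (Qsol h2 a x x1 a0 E) => ->; rewrite ?eqxx ?orbT.
by rewrite cards2; case: (_ != _).
Qed.
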